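(* Let $\rho:\mathbb{N}\times\mathbb{N}\to\mathbb{N}$ be a bijection that is monotonic in the sense that $\rho(a,b)\le\rho(c,d)$ whenever $a\le c$ and $b\le d$. Define the infinite matrix $\mathbf{A}=[a(n,k)]_{n,k\ge 0}$ and infinite vectors $\mathbf{x}=[x(k)]_{k\ge0}$, $\mathbf{b}=[b(n)]_{n\ge 0}$ by $a(n,k)=c(u,v,i,j)$, $x(k)=f(i,j)$, and $b(n)=1$ if $u=v=1$, $b(n)=0$ otherwise, where $(u,v)=\rho^{-1}(n)$ and $(i,j)=\rho^{-1}(k)$. Then (i) $\mathbf{A}$ is lower-triangular with all diagonal entries equal to $1$; (ii) $\mathbf{A}\mathbf{x}=\mathbf{b}$ (each row sum $\sum_k a(n,k)x(k)$ having only finitely many nonzero terms).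
   Context: $F(m;\,n_1,n_2)$ denotes the number of lattice walks from $(0,0)$ to $(n_1,n_2)$ that always stay in the first quadrant $\{(a,b): a\ge 0,\ b\ge 0\}$ and have exactly $m$ steps, each belonging to $\{(1,0),(-1,0),(1,1),(-1,-1)\}$; by convention $F(m;\,n_1,n_2)=0$ if $m<0$, $n_1<0$ or $n_2<0$. Define $\widetilde F(m;\,n_1,0)=F(m-1;\,n_1,0)$ and $\widetilde F(m;\,0,n_2)=F(m-1;\,0,n_2)+F(m-1;\,0,n_2-1)$ for $m,n_1,n_2\ge 0$ (these agree at $n_1=n_2=0$). Define for $i,j\ge 0$: $f(i,j)=\widetilde F(i;\,0,j-i)$ if $i\le j$, and $f(i,j)=\widetilde F(j;\,i-j,0)$ if $i\ge j$. For $u,v,i,j\ge0$ define $c(u,v,i,j)=\binom{-\min\{i,j\}}{\frac{u-i}{2}}\binom{-\min\{i,j\}}{v-j-\frac{u-i}{2}}$ if $i\equiv u\pmod 2$ and $c(u,v,i,j)=0$ otherwise, where for integers $a,k$, $\binom{a}{k}=\frac{a(a-1)\cdots(a-k+1)}{k!}$ if $k\ge0$ and $\binom{a}{k}=0$ if $k<0$. *)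

(* Defs.v *)
From mathcomp Require Import all_boot all_order all_algebra.
Set Implicit Arguments. Unset Strict Implicit. Unset Printing Implicit Defensive.
Import Order.TTheory GRing.Theory Num.Theory.
Local Open Scope ring_scope.

Definition stepx (d : 'I_4) : int :=
  match val d with 0%N => 1 | 1%N => -1 | 2%N => 1 | _ => -1 end.
Definition stepy (d : 'I_4) : int :=
  match val d with 0%N => 0 | 1%N => 0 | 2%N => 1 | _ => -1 end.

Definition posx (s : seq 'I_4) : int := \sum_(d <- s) stepx d.
Definition posy (s : seq 'I_4) : int := \sum_(d <- s) stepy d.

Definition in_quadrant (s : seq 'I_4) : bool := (0 <= posx s) && (0 <= posy s).

(* a walk of m steps staying in the first quadrant (all prefixes, including
   the empty one and the full walk) and ending at (n1, n2) *)
Definition good_walk (m : nat) (n1 n2 : int) (w : m.-tuple 'I_4) : bool :=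
  [forall t : 'I_m.+1, in_quadrant (take t w)] &&
  (posx w == n1) && (posy w == n2).

Definition F (m n1 n2 : int) : nat :=
  if (m < 0) || (n1 < 0) || (n2 < 0) then 0%N
  else #|[set w : (`|m|%N).-tuple 'I_4 | @good_walk `|m|%N n1 n2 w]|.

(* \widetilde F(m; n1, 0) = F(m-1; n1, 0);
   \widetilde F(m; 0, n2) = F(m-1; 0, n2) + F(m-1; 0, n2-1) *)
Definition Ft_x (m n1 : nat) : nat := F (m%:Z - 1) n1%:Z 0.
Definition Ft_y (m n2 : nat) : nat := (F (m%:Z - 1) 0 n2%:Z + F (m%:Z - 1) 0 (n2%:Z - 1))%N.

Definition f (i j : nat) : nat :=
  if (i <= j)%N then Ft_y i (j - i) else Ft_x j (i - j).

Definition gbinom (a k : int) : rat :=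
  if k < 0 then 0
  else (\prod_(l < `|k|%N) (a - l%:Z)%:~R) / ((`|k|%N)`!)%:R.

Definition c (u v i j : nat) : rat :=
  if odd i == odd u then
    let h : int := ((u%:Z - i%:Z) %/ 2)%Z in
    gbinom (- (minn i j)%:Z) h * gbinom (- (minn i j)%:Z) (v%:Z - j%:Z - h)
  else 0.

Definition Amat (rhoinv : nat -> nat * nat) (n k : nat) : rat :=
  c (rhoinv n).1 (rhoinv n).2 (rhoinv k).1 (rhoinv k).2.
Definition xvec (rhoinv : nat -> nat * nat) (k : nat) : rat :=
  (f (rhoinv k).1 (rhoinv k).2)%:R.
Definition bvec (rhoinv : nat -> nat * nat) (n : nat) : rat :=
  if ((rhoinv n).1 == 1%N) && ((rhoinv n).2 == 1%N) then 1 else 0.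

(* Main.v *)
Require Import Defs.
From mathcomp Require Import all_boot all_order all_algebra.
From mathcomp Require Import zify ring lra.
Import Order.TTheory GRing.Theory Num.Theory.
Local Open Scope ring_scope.


Lemma rcons_belast_last {T : Type} {x : T} {s w d} :
  x :: s = rcons w d -> belast x s = w /\ last x s = d.
Proof. by rewrite lastI => /rcons_inj [-> ->]. Qed.

Lemma sum_tuple_rcons (m : nat) (g : (m.+1).-tuple 'I_4 -> nat) :
  (\sum_(w : (m.+1).-tuple 'I_4) g w =
   \sum_(w : m.-tuple 'I_4) \sum_(d : 'I_4) g [tuple of rcons w d])%N.
Proof.
rewrite pair_big /=.
pose h (x : m.-tuple 'I_4 * 'I_4) := [tuple of rcons x.1 x.2].
pose hi (w : (m.+1).-tuple 'I_4) : m.-tuple 'I_4 * 'I_4 :=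
  ([tuple of belast (thead w) (behead w)], last (thead w) (behead w)).
rewrite (reindex h) /=; last first.
  exists hi => [[w d] _|w _]; rewrite /h /hi /=.
    have E : thead [tuple of rcons w d] :: behead [tuple of rcons w d] = rcons w d.
      by have /(congr1 val) := tuple_eta [tuple of rcons w d].
    have [E1 E2] := rcons_belast_last E.
    by congr (_, _); [apply: val_inj|]; rewrite /= ?E1 ?E2.
  apply: val_inj => /=.
  by rewrite -lastI; have /(congr1 val) := tuple_eta w.
by [].
Qed.

Lemma posx_rcons (s : seq 'I_4) d : posx (rcons s d) = posx s + stepx d.
Proof. by rewrite /posx -cats1 big_cat big_seq1. Qed.
Lemma posy_rcons (s : seq 'I_4) d : posy (rcons s d) = posy s + stepy d.
Proof. by rewrite /posy -cats1 big_cat big_seq1. Qed.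

Lemma forall_take_rcons (m : nat) (w : m.-tuple 'I_4) d :
  [forall t : 'I_m.+2, in_quadrant (take t (rcons w d))] =
  [forall t : 'I_m.+1, in_quadrant (take t w)] && in_quadrant (rcons w d).
Proof.
apply/forallP/andP => [H|[/forallP H1 H2] t].
  split; last first.
    have := H ord_max => /=.
    have -> : m.+1 = size (rcons w d) by rewrite size_rcons size_tuple.
    by rewrite take_size.
  apply/forallP => t; have := H (widen_ord (leqnSn _) t) => /=.
  by rewrite -cats1 takel_cat // size_tuple -ltnS.
have := ltn_ord t; rewrite ltnS leq_eqVlt => /orP [Et|Ht].
  rewrite (eqP Et).
  have -> : m.+1 = size (rcons w d) by rewrite size_rcons size_tuple.
  by rewrite take_size.
have := H1 (Ordinal Ht) => /=.
by rewrite -cats1 takel_cat // size_tuple -ltnS.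
Qed.

Lemma good_rcons m p q (w : m.-tuple 'I_4) d :
  @good_walk m.+1 p q [tuple of rcons w d] =
  [&& 0 <= p, 0 <= q & @good_walk m (p - stepx d) (q - stepy d) w].
Proof.
rewrite /good_walk /= forall_take_rcons /in_quadrant posx_rcons posy_rcons.
have E (a b c : int) : (a == c - b) = (a + b == c).
  by rewrite eq_sym subr_eq eq_sym.
rewrite !E.
case: (posx w + stepx d =P p) => [<-|]; case: (posy w + stepy d =P q) => [<-|];
  rewrite ?andbF ?andFb ?andbT //.
by case: [forall _, _]; case: (0 <= _); case: (0 <= _ + stepy d).
Qed.

Fixpoint Frec (m : nat) (p q : int) : nat :=
  match m with
  | 0%N => ((p == 0) && (q == 0) : nat)
  | m'.+1 => if (p < 0) || (q < 0) then 0%N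
             else (\sum_(d < 4) Frec m' (p - stepx d) (q - stepy d))%N
  end.

Lemma card_sum (T : finType) (P : pred T) : #|[set x | P x]| = (\sum_x (P x : nat))%N.
Proof. by rewrite -sum1dep_card big_mkcond /=; apply: eq_bigr => x _; case: (P x). Qed.

Lemma card_good m p q : #|[set w : m.-tuple 'I_4 | @good_walk m p q w]| = Frec m p q.
Proof.
elim: m p q => [|m IH] p q.
  rewrite card_sum (eq_bigr (fun _ => (@good_walk 0 p q [tuple] : nat))); last first.
    by move=> w _; rewrite tuple0.
  rewrite sum_nat_const card_tuple card_ord expn0 mul1n /=.
  rewrite /good_walk /= /posx /posy !big_nil.
  have -> : [forall t : 'I_1, in_quadrant [::]].
    by apply/forallP => t; rewrite /in_quadrant /posx /posy !big_nil.
  by rewrite !(eq_sym 0).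
rewrite card_sum sum_tuple_rcons /=.
under eq_bigr => w _ do under eq_bigr => d _ do rewrite good_rcons.
case: ltP => Hp /=.
  by rewrite big1 // => w _; rewrite big1 // => d _; rewrite leNgt Hp.
case: ltP => Hq /=.
  by rewrite big1 // => w _; rewrite big1 // => d _; rewrite (leNgt 0 q) Hq andbF.
rewrite exchange_big /=; apply: eq_bigr => d _.
by rewrite -IH card_sum.
Qed.

Lemma gbinom_neg a k : k < 0 -> gbinom a k = 0.
Proof. by rewrite /gbinom => ->. Qed.

Lemma gbinom0 a : gbinom a 0 = 1.
Proof. by rewrite /gbinom /= big_ord0 divr1. Qed.

Lemma gbinomS a (n : nat) : gbinom a n.+1%:Z =
  (\prod_(l < n) (a - l%:Z)%:~R) * (a - n%:Z)%:~R / (n.+1`!)%:R.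
Proof. by rewrite /gbinom /= big_ord_recr. Qed.

Lemma gbinom_nat a (n : nat) : gbinom a n%:Z =
  (\prod_(l < n) (a - l%:Z)%:~R) / (n`!)%:R.
Proof. by []. Qed.

Lemma gbinom_pascal a k : gbinom a k + gbinom a (k - 1) = gbinom (a + 1) k.
Proof.
case: k => [n|n]; last first.
  rewrite (@gbinom_neg a (Negz n)) ?(@gbinom_neg a (Negz n - 1)) ?(@gbinom_neg (a+1) (Negz n)) ?addr0 //; lia.
case: n => [|n].
  by rewrite !gbinom0 gbinom_neg // addr0.
have -> : (n.+1%:Z - 1) = n%:Z by rewrite -addn1 PoszD addrK.
rewrite gbinomS !gbinom_nat big_ord_recl /=.
have Eprod : \prod_(i < n) (a + 1 - (bump 0 i)%:Z)%:~R =
             \prod_(l < n) ((a - l%:Z)%:~R : rat).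
  by apply: eq_bigr => i _; congr (_%:~R); rewrite /bump /= add1n -addn1 PoszD opprD addrACA subrr addr0.
rewrite Eprod subr0 factS natrM.
have Hf : (n`!)%:R != 0 :> rat by rewrite pnatr_eq0 -lt0n fact_gt0.
have Hn : (n.+1)%:R != 0 :> rat by rewrite pnatr_eq0.
set P := \prod_(l < n) _.
rewrite !rmorphB !rmorphD /= !pmulrn /=.
have Hn2 : 1 + n%:R != 0 :> rat by rewrite addrC natr1.
by field; rewrite Hf Hn2.
Qed.


Lemma gbinom0l k : gbinom 0 k = (k == 0)%:R.
Proof.
case: k => [[|n]|n]; first by rewrite gbinom0.
  by rewrite gbinom_nat big_ord_recl /= subr0 !mul0r.
by rewrite gbinom_neg.
Qed.

Definition Tm (u v m a b : nat) : rat :=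
  if odd a == odd u then
    let h : int := ((u%:Z - a%:Z) %/ 2)%Z in
    gbinom (- m%:Z) h * gbinom (- m%:Z) (v%:Z - b%:Z - h)
  else 0.

Lemma c_Tm u v i j : c u v i j = Tm u v (minn i j) i j.
Proof. by []. Qed.

Lemma Tm_four u v m a b :
  Tm u v m.+1 a b + Tm u v m.+1 a b.+1 + Tm u v m.+1 a.+2 b.+1 + Tm u v m.+1 a.+2 b.+2
  = Tm u v m a b.
Proof.
rewrite /Tm /= negbK.
case: (odd a == odd u); last by rewrite !addr0.
have -> : (u%:Z - a.+2%:Z) = (-1) * 2 + (u%:Z - a%:Z).
  lia.
rewrite divzMDl //.
set h := ((u%:Z - a%:Z) %/ 2)%Z.
set k := v%:Z - b%:Z - h.
have -> : v%:Z - b.+1%:Z - h = k - 1 by rewrite /k; lia.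
have -> : v%:Z - b.+1%:Z - (-1 + h) = k by rewrite /k; lia.
have -> : v%:Z - b.+2%:Z - (-1 + h) = k - 1 by rewrite /k; lia.
have -> : (-1 + h) = h - 1 by lia.
have -> : - m%:Z = - m.+1%:Z + 1 by lia.
rewrite -!gbinom_pascal.
set A := gbinom _ h; set B := gbinom _ k; set C := gbinom _ (h - 1); set D := gbinom _ (k - 1).
ring.
Qed.

Lemma Frec_neg m (p q : int) : (p < 0) || (q < 0) -> Frec m p q = 0%N.
Proof.
case: m => [|m] /= H; last by rewrite H.
by apply/eqP; rewrite eqb0 negb_and; case/orP: H => H; apply/orP; [left|right];
  rewrite lt_eqF.
Qed.

Lemma F_Frec (m : nat) (x y : int) : F m%:Z x y = Frec m x y.
Proof.
rewrite /F /=; case: ifP => H; last by rewrite card_good.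
by rewrite Frec_neg //; move: H; rewrite /= ltNge lez_nat /=.
Qed.

Lemma F_negm (m x y : int) : m < 0 -> F m x y = 0%N.
Proof. by rewrite /F => ->. Qed.

Notation Rf m p q := ((Frec m p q)%:R : rat).

Lemma core m (P Q : int) :
  Rf m P Q + Rf m P (Q-1) + Rf m (P-2) (Q-1) + Rf m (P-2) (Q-2) =
  Rf m.+1 (P-1) (Q-1) +
  (if (P - 1 < 0) || (Q - 1 < 0)
   then Rf m P Q + Rf m P (Q-1) + Rf m (P-2) (Q-1) + Rf m (P-2) (Q-2) else 0).
Proof.
rewrite /= ; case: ifP => H; first by rewrite add0r.
rewrite addr0 !big_ord_recr big_ord0 /= /stepx /stepy /= !natrD ?add0n ?add0r.
have -> : P - 1 - 1 = P - 2 by lia.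
have -> : P - 1 - -1 = P by lia.
have -> : Q - 1 - 0 = Q - 1 by lia.
have -> : Q - 1 - 1 = Q - 2 by lia.
have -> : Q - 1 - -1 = Q by lia.
ring.
Qed.


Lemma boundary m a b :
  (if (a%:Z - m.+1%:Z - 1 < 0) || (b%:Z - m.+1%:Z - 1 < 0)
   then Rf m (a%:Z - m.+1%:Z) (b%:Z - m.+1%:Z) + Rf m (a%:Z - m.+1%:Z) (b%:Z - m.+1%:Z - 1)
      + Rf m (a%:Z - m.+1%:Z - 2) (b%:Z - m.+1%:Z - 1)
      + Rf m (a%:Z - m.+1%:Z - 2) (b%:Z - m.+1%:Z - 2) else 0)
  = ((minn a b == m.+1 : bool) : nat)%:R * (f a b)%:R.
Proof.
have Fm : m.+1%:Z - 1 = m%:Z by lia.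
case: (leqP a m) => Ha.
  have Hmin : (minn a b == m.+1) = false by apply/negbTE; lia.
  rewrite Hmin mul0r.
  case: ifP => // _.
  rewrite !Frec_neg ?addr0 //; apply/orP; left; lia.
case: (leqP b m) => Hb.
  have Hmin : (minn a b == m.+1) = false by apply/negbTE; lia.
  rewrite Hmin mul0r.
  case: ifP => // _.
  rewrite !Frec_neg ?addr0 //; apply/orP; right; lia.
case: (ltnP m.+1 a) => Ha2; case: (ltnP m.+1 b) => Hb2.
- rewrite ifF; last by apply/negbTE; rewrite negb_or -!leNgt; apply/andP; split; lia.
  by rewrite (_ : minn a b == m.+1 = false) ?mul0r //; apply/negbTE; lia.
- have Eb : b = m.+1 by lia.
  rewrite ifT; last by apply/orP; right; lia.
  rewrite (_ : minn a b == m.+1 = true) ?mul1r; last by apply/eqP; lia.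
  rewrite /f ifF; last by apply/negbTE; lia.
  subst b; rewrite /Ft_x Fm F_Frec.
  have Z1 : forall x y : int, y < 0 -> Frec m x y = 0%N.
    by move=> x y Hy; rewrite Frec_neg // Hy orbT.
  rewrite !(Z1 _ (m.+1%:Z - m.+1%:Z - 1)) ?(Z1 _ (m.+1%:Z - m.+1%:Z - 2)); try lia.
  rewrite !addr0 subrr (_ : (a%:Z - m.+1%:Z) = (a - m.+1)%N) //; lia.
- have Ea : a = m.+1 by lia.
  rewrite ifT; last by apply/orP; left; lia.
  rewrite (_ : minn a b == m.+1 = true) ?mul1r; last by apply/eqP; lia.
  rewrite /f ifT; last by lia.
  subst a; rewrite /Ft_y Fm !F_Frec.
  have Z1 : forall x y : int, x < 0 -> Frec m x y = 0%N.
    by move=> x y Hy; rewrite Frec_neg // Hy.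
  rewrite !(Z1 (m.+1%:Z - m.+1%:Z - 2)); try lia.
  by rewrite !addr0 natrD subrr (_ : (b%:Z - m.+1%:Z) = (b - m.+1)%N) //; lia.
- have Ea : a = m.+1 by lia.
  have Eb : b = m.+1 by lia.
  rewrite ifT; last by apply/orP; left; lia.
  rewrite (_ : minn a b == m.+1 = true) ?mul1r; last by apply/eqP; lia.
  rewrite /f ifT; last by lia.
  subst a b; rewrite /Ft_y Fm !F_Frec.
  have Z1 : forall x y : int, x < 0 -> Frec m x y = 0%N.
    by move=> x y Hy; rewrite Frec_neg // Hy.
  rewrite !(Z1 (m.+1%:Z - m.+1%:Z - 2)); try lia.
  by rewrite !addr0 natrD subrr subnn.
Qed.


Lemma divz2_bounds (x : int) : (x %/ 2)%Z * 2 <= x < (x %/ 2)%Z * 2 + 2.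
Proof.
have E := divz_eq x 2.
have H1 : 0 <= (x %% 2)%Z by apply: modz_ge0.
have H2 : (x %% 2)%Z < 2 by apply: ltz_pmod.
apply/andP; split; lia.
Qed.

Lemma Tm_out u v m a b : (u < a)%N || (v < b)%N -> Tm u v m a b = 0.
Proof.
move=> H; rewrite /Tm; case: ifP => // _.
have := divz2_bounds (u%:Z - a%:Z).
set h := ((u%:Z - a%:Z) %/ 2)%Z => /andP [H1 H2].
case: (ltnP u a) => Hua.
  by rewrite gbinom_neg ?mul0r //; lia.
have Hvb : (v < b)%N by move: H; rewrite ltnNge Hua.
by rewrite (@gbinom_neg _ (v%:Z - b%:Z - h)) ?mulr0 //; lia.
Qed.

Lemma shift_sum (K s : nat) (phi : int -> rat) (psi : nat -> rat) :
  (forall z, z < 0 -> phi z = 0) -> (forall x, (K <= x)%N -> psi x = 0) ->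
  \sum_(0 <= a < K) phi a%:Z * psi (a + s)%N =
  \sum_(0 <= a < K) phi (a%:Z - s%:Z) * psi a.
Proof.
move=> Hphi Hpsi.
have E1 : \sum_(0 <= a < K + s) phi (a%:Z - s%:Z) * psi a =
          \sum_(0 <= a < K) phi (a%:Z - s%:Z) * psi a.
  rewrite (@big_cat_nat _ _ _ K) //=; last by rewrite leq_addr.
  rewrite [X in _ + X]big_nat_cond [X in _ + X]big1 ?addr0 //.
  by move=> i /andP [/andP [Hi _] _]; rewrite Hpsi ?mulr0.
rewrite -E1 [RHS](@big_cat_nat _ _ _ s) //=; last by lia.
rewrite [X in _ = X + _]big_nat_cond [X in _ = X + _]big1 ?add0r; last first.
  by move=> i /andP [/andP [_ Hi] _]; rewrite Hphi ?mul0r //; lia.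
rewrite -{2}(add0n s) big_addn addnK.
by apply: eq_bigr => i _; rewrite PoszD addrK.
Qed.

Lemma shift2 (K s t : nat) (Phi : int -> int -> rat) (Psi : nat -> nat -> rat) :
  (forall x y, (x < 0) || (y < 0) -> Phi x y = 0) ->
  (forall x y, (K <= x)%N || (K <= y)%N -> Psi x y = 0) ->
  \sum_(0 <= a < K) \sum_(0 <= b < K) Phi a%:Z b%:Z * Psi (a + s)%N (b + t)%N =
  \sum_(0 <= a < K) \sum_(0 <= b < K) Phi (a%:Z - s%:Z) (b%:Z - t%:Z) * Psi a b.
Proof.
move=> HPhi HPsi.
transitivity (\sum_(0 <= a < K) \sum_(0 <= b < K) Phi a%:Z (b%:Z - t%:Z) * Psi (a + s)%N b).
  apply: eq_bigr => a _; apply: shift_sum => [z Hz|x Hx].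
    by rewrite HPhi // Hz orbT.
  by rewrite HPsi // Hx orbT.
rewrite exchange_big [RHS]exchange_big /=.
apply: eq_bigr => b _.
apply: (@shift_sum K s (fun z => Phi z (b%:Z - t%:Z)) (fun x => Psi x b)) => [z Hz|x Hx].
  by rewrite HPhi // Hz.
by rewrite HPsi // Hx.
Qed.

Definition G u v K m := \sum_(0 <= a < K) \sum_(0 <= b < K)
  Rf m (a%:Z - m.+1%:Z) (b%:Z - m.+1%:Z) * Tm u v m a b.
Definition Bd u v K m := \sum_(0 <= a < K) \sum_(0 <= b < K)
  Tm u v m.+1 a b * (((minn a b == m.+1) : nat)%:R * (f a b)%:R).

Lemma G_rec u v K m : (u < K)%N -> (v < K)%N -> G u v K m = G u v K m.+1 + Bd u v K m.
Proof.
move=> HuK HvK.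
pose Phi (x y : int) := Rf m (x - m.+1%:Z) (y - m.+1%:Z).
pose Psi := Tm u v m.+1.
have HPhi : forall x y, (x < 0) || (y < 0) -> Phi x y = 0.
  move=> x y H; rewrite /Phi Frec_neg //.
  by case/orP: H => H; apply/orP; [left|right]; lia.
have HPsi : forall x y, (K <= x)%N || (K <= y)%N -> Psi x y = 0.
  move=> x y H; rewrite /Psi Tm_out //.
  by case/orP: H => H; apply/orP; [left|right]; lia.
transitivity (
  \sum_(0 <= a < K) \sum_(0 <= b < K) Phi a%:Z b%:Z * Psi (a + 0)%N (b + 0)%N +
  \sum_(0 <= a < K) \sum_(0 <= b < K) Phi a%:Z b%:Z * Psi (a + 0)%N (b + 1)%N +
  \sum_(0 <= a < K) \sum_(0 <= b < K) Phi a%:Z b%:Z * Psi (a + 2)%N (b + 1)%N +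
  \sum_(0 <= a < K) \sum_(0 <= b < K) Phi a%:Z b%:Z * Psi (a + 2)%N (b + 2)%N).
  rewrite /G -!big_split /=; apply: eq_bigr => a _.
  rewrite -!big_split /=; apply: eq_bigr => b _.
  rewrite -Tm_four /Phi /Psi !addn0 !addn1 !addn2; ring.
rewrite !shift2 //.
rewrite /G /Bd -!big_split /=; apply: eq_bigr => a _.
rewrite -!big_split /=; apply: eq_bigr => b _.
rewrite /Phi /Psi -!mulrDl.
have -> : a%:Z - 0%:Z - m.+1%:Z = a%:Z - m.+1%:Z by lia.
have -> : b%:Z - 0%:Z - m.+1%:Z = b%:Z - m.+1%:Z by lia.
have -> : b%:Z - 1%:Z - m.+1%:Z = b%:Z - m.+1%:Z - 1 by lia.
have -> : b%:Z - 2%:Z - m.+1%:Z = b%:Z - m.+1%:Z - 2 by lia.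
have -> : a%:Z - 2%:Z - m.+1%:Z = a%:Z - m.+1%:Z - 2 by lia.
have -> : a%:Z - m.+2%:Z = a%:Z - m.+1%:Z - 1 by lia.
have -> : b%:Z - m.+2%:Z = b%:Z - m.+1%:Z - 1 by lia.
rewrite core boundary; ring.
Qed.

Lemma sum_delta (K j : nat) (g : nat -> rat) :
  \sum_(0 <= b < K) ((b == j) : nat)%:R * g b = if (j < K)%N then g j else 0.
Proof.
elim: K => [|K IH]; first by rewrite big_geq.
rewrite big_nat_recr //= IH.
case: (ltngtP j K) => H.
- by rewrite ltnS (ltnW H) /= mul0r addr0.
- by rewrite ltnS leqNgt H /= mul0r addr0.
- by rewrite H ltnSn /= mul1r add0r.
Qed.

Lemma f_min0 a b : minn a b = 0%N -> f a b = 0%N.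
Proof.
move=> H; rewrite /f; case: ifP => Hab.
  have -> : a = 0%N by lia.
  by rewrite /Ft_y !F_negm.
have -> : b = 0%N by lia.
by rewrite /Ft_x F_negm.
Qed.

Lemma G_u u v K : G u v K u = 0.
Proof.
rewrite /G big1 // => a _; rewrite big1 // => b _.
case: (ltnP u a) => H.
  by rewrite Tm_out ?H // mulr0.
by rewrite Frec_neg ?mul0r //; apply/orP; left; lia.
Qed.

Lemma G_0 u v K : (1 < K)%N -> G u v K 0 = (((u == 1%N) && (v == 1%N)) : nat)%:R.
Proof.
move=> HK.
transitivity (\sum_(0 <= a < K) ((a == 1%N) : nat)%:R *
   \sum_(0 <= b < K) ((b == 1%N) : nat)%:R * Tm u v 0 a b).
  rewrite /G; apply: eq_bigr => a _; rewrite big_distrr /=; apply: eq_bigr => b _.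
  rewrite mulrA -natrM; congr (_%:R * _).
  have Ea : (a%:Z - 1%:Z == 0) = (a == 1%N) by apply/eqP/eqP; lia.
  have Eb : (b%:Z - 1%:Z == 0) = (b == 1%N) by apply/eqP/eqP; lia.
  by rewrite /= Ea Eb; case: (a == 1%N); case: (b == 1%N).
rewrite sum_delta HK sum_delta HK /Tm /=.
have := divz2_bounds (u%:Z - 1).
set h := ((u%:Z - 1) %/ 2)%Z => /andP [H1 H2].
rewrite !gbinom0l.
case: (u =P 1%N) => Hu.
  subst u; have Hh : h = 0 by lia.
  rewrite Hh /= mul1r.
  have -> : (v%:Z - 1%:Z - 0 == 0) = (v == 1%N) by apply/eqP/eqP; lia.
  by [].
case: ifP => Hodd; last by rewrite andFb.
case: (h =P 0) => Hh; last by rewrite mul0r.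
exfalso; apply: Hu.
have Ho : odd u by move: Hodd; case: (odd u).
have Hu1 : (u%:Z - 1) = 0 \/ (u%:Z - 1) = 1 by lia.
case: Hu1 => E; first by lia.
have E2 : u = 2%N by lia.
by move: Ho; rewrite E2.
Qed.

Lemma G_tele u v K n : (u < K)%N -> (v < K)%N ->
  G u v K 0 = G u v K n + \sum_(0 <= m < n) Bd u v K m.
Proof.
move=> HuK HvK; elim: n => [|n IH]; first by rewrite big_geq // addr0.
by rewrite IH big_nat_recr //= (G_rec u v K n HuK HvK); ring.
Qed.

Lemma box_identity u v K : (u < K)%N -> (v < K)%N -> (1 < K)%N ->
  \sum_(0 <= a < K) \sum_(0 <= b < K) c u v a b * (f a b)%:R =
  (((u == 1%N) && (v == 1%N)) : nat)%:R.
Proof.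
move=> HuK HvK HK.
rewrite -(G_0 u v K HK) (G_tele u v K u HuK HvK) G_u add0r /Bd.
rewrite [RHS]exchange_big /=; apply: eq_bigr => a _.
rewrite [RHS]exchange_big /=; apply: eq_bigr => b _.
rewrite c_Tm.
case E: (minn a b) => [|k].
  rewrite f_min0 // mulr0 big1 // => m _; by rewrite mulr0.
under eq_bigr => m _ do rewrite eqSS mulrCA eq_sym.
rewrite (sum_delta u k (fun m => Tm u v m.+1 a b * (f a b)%:R)).
case: ifP => // Hk.
rewrite Tm_out ?mul0r //; apply/orP; left; lia.
Qed.


Lemma natr_andb (x y : bool) : ((x && y) : nat)%:R = (x : nat)%:R * (y : nat)%:R :> rat.
Proof. by case: x; case: y; rewrite /= ?mul1r ?mul0r. Qed.

Lemma reindex_rho (rho : nat * nat -> nat) (rhoinv : nat -> nat * nat)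
  (rhoK : cancel rho rhoinv) (rhoinvK : cancel rhoinv rho)
  (rho_mono : forall a b c d : nat, (a <= c)%N -> (b <= d)%N ->
                (rho (a, b) <= rho (c, d))%N)
  (n K : nat) (g : nat -> nat -> rat) :
  (forall a b, ((rhoinv n).1 < a)%N || ((rhoinv n).2 < b)%N -> g a b = 0) ->
  ((rhoinv n).1 < K)%N -> ((rhoinv n).2 < K)%N ->
  \sum_(0 <= k < n.+1) g (rhoinv k).1 (rhoinv k).2 =
  \sum_(0 <= a < K) \sum_(0 <= b < K) g a b.
Proof.
move=> Hg HuK HvK.
set u := (rhoinv n).1 in Hg HuK; set v := (rhoinv n).2 in Hg HvK.
have Hn : rho (u, v) = n by rewrite /u /v -surjective_pairing rhoinvK.
pose G k := g (rhoinv k).1 (rhoinv k).2.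
transitivity (\sum_(0 <= a < K) \sum_(0 <= b < K)
   \sum_(0 <= k < n.+1) ((k == rho (a, b)) : nat)%:R * G k); last first.
  apply: eq_bigr => a _; apply: eq_bigr => b _.
  rewrite sum_delta /G rhoK /=.
  case: ifP => // H.
  rewrite Hg //; case: (ltnP u a) => Ha //; case: (ltnP v b) => Hb //.
  by move: H; rewrite -Hn ltnS rho_mono.
under [RHS]eq_bigr => a _ do rewrite exchange_big /=.
rewrite [RHS]exchange_big /=; apply: eq_bigr => k _.
have E : forall a b, (k == rho (a, b)) = (a == (rhoinv k).1) && (b == (rhoinv k).2).
  move=> a b; apply/eqP/andP => [->|[/eqP -> /eqP ->]]; first by rewrite rhoK.
  by rewrite -surjective_pairing rhoinvK.
symmetry.
under eq_bigr => a _ do under eq_bigr => b _ do rewrite E natr_andb -mulrA.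
under eq_bigr => a _ do rewrite -big_distrr /= sum_delta.
rewrite sum_delta.
case: (leqP K (rhoinv k).1) => H1.
  rewrite /G Hg // ; apply/orP; left; lia.
case: (leqP K (rhoinv k).2) => H2.
  rewrite /G Hg // ; apply/orP; right; lia.
by [].
Qed.

Theorem corollary5 (rho : nat * nat -> nat) (rhoinv : nat -> nat * nat)
  (rhoK : cancel rho rhoinv) (rhoinvK : cancel rhoinv rho)
  (rho_mono : forall a b c d : nat, (a <= c)%N -> (b <= d)%N ->
                (rho (a, b) <= rho (c, d))%N) :
  ((forall n k : nat, (n < k)%N -> Amat rhoinv n k = 0) /\
   (forall n : nat, Amat rhoinv n n = 1)) /\
  (forall n : nat, exists N : nat,
     (forall k : nat, (N <= k)%N -> Amat rhoinv n k * xvec rhoinv k = 0) /\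
     \sum_(k < N) Amat rhoinv n k * xvec rhoinv k = bvec rhoinv n).
Proof.
have Hlow : forall n k : nat, (n < k)%N -> Amat rhoinv n k = 0.
  move=> n k Hnk; rewrite /Amat c_Tm Tm_out //.
  case: (ltnP (rhoinv n).1 (rhoinv k).1) => H1 //.
  case: (ltnP (rhoinv n).2 (rhoinv k).2) => H2 //.
  have := rho_mono _ _ _ _ H1 H2.
  by rewrite -!surjective_pairing !rhoinvK leqNgt Hnk.
split; first split => //.
  move=> n; rewrite /Amat /c eqxx /= subrr.
  have -> : (0 %/ 2)%Z = 0 by [].
  by rewrite subrr subr0 gbinom0 mulr1.
move=> n; exists n.+1; split.
  by move=> k Hk; rewrite Hlow // mul0r.
rewrite -(big_mkord xpredT (fun k => Amat rhoinv n k * xvec rhoinv k)).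
set u := (rhoinv n).1; set v := (rhoinv n).2.
rewrite (@reindex_rho rho rhoinv rhoK rhoinvK rho_mono n (u + v + 2)
           (fun a b => c u v a b * (f a b)%:R)) /=.
- rewrite box_identity; try lia.
  by rewrite /bvec -/u -/v; case: (u == 1%N); case: (v == 1%N).
- by move=> a b H; rewrite c_Tm Tm_out ?mul0r.
- rewrite -/u; lia.
- rewrite -/v; lia.
Qed.
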